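(* Let $p$ be a prime, and let $G$ and $A$ be finite abelian $p$-groups (written additively). For a $2$-cocycle $\alpha\colon G\times G\to A$ let $E(\alpha)$ be the group with underlying set $A\times G$ and multiplication $(a_1,g_1)(a_2,g_2)=(a_1+a_2+\alpha(g_1,g_2),g_1+g_2)$, and put $\eta^\alpha(g_1,g_2)=\alpha(g_1,g_2)-\alpha(g_2,g_1)$. Let $\alpha,\alpha'$ be $2$-cocycles such that the image of $\eta^\alpha$ generates $A$ and the image of $\eta^{\alpha'}$ generates $A$ (equivalently $[E(\alpha),E(\alpha)]=[E(\alpha'),E(\alpha')]=A$). An endomorphism $\varphi\in\mathrm{End}(G)$ can be lifted to a homomorphism $\phi\colon E(\alpha)\to E(\alpha')$ (i.e. a homomorphism with $\phi(a,g)\in A\times\{\varphi(g)\}$ for all $(a,g)$) if and only if there exists $\psi\in\mathrm{End}(A)$ such that $$\psi(\eta^{\alpha}(g_1,g_2))=\eta^{\alpha'}(\varphi(g_1),\varphi(g_2))\quad\text{for all } g_1,g_2\in G,\qquad \varphi^\ast([\alpha'])=\psi_\ast([\alpha])\ \text{in } H^2(G;A).$$ When these hold, each such lift $\phi$ is given by $\phi(a,g)=(\psi(a)+\mu(g),\varphi(g))$ for a unique function $\mu\colon G\to A$ satisfying $\delta\mu=\psi_\ast(\alpha)-\varphi^\ast(\alpha')$, where $(\delta\mu)(g_1,g_2)=\mu(g_1)+\mu(g_2)-\mu(g_1+g_2)$. In particular, an automorphism $\varphi\in\mathrm{Aut}(G)$ can be lifted to an isomorphism $E(\alpha)\to E(\alpha')$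 if and only if there exists $\psi\in\mathrm{Aut}(A)$ such that $\psi(\eta^{\alpha}(g_1,g_2))=\eta^{\alpha'}(\varphi(g_1),\varphi(g_2))$ for all $g_1,g_2\in G$ and $\varphi^\ast([\alpha'])=\psi_\ast([\alpha])$.
   Context: A $2$-cocycle is a function $\alpha\colon G\times G\to A$ with $\alpha(g_1,g_2)-\alpha(g_1,g_2+g_3)+\alpha(g_1+g_2,g_3)-\alpha(g_2,g_3)=0$ for all $g_i\in G$. For $\varphi\in\mathrm{End}(G)$ and $\psi\in\mathrm{End}(A)$, $(\varphi^\ast\alpha)(g_1,g_2)=\alpha(\varphi(g_1),\varphi(g_2))$ and $(\psi_\ast\alpha)(g_1,g_2)=\psi(\alpha(g_1,g_2))$; these induce the maps $\varphi^\ast,\psi_\ast$ on $H^2(G;A)$. *)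

(* Defs.v *)
From mathcomp Require Import all_boot all_order all_algebra.
Set Implicit Arguments. Unset Strict Implicit. Unset Printing Implicit Defensive.
Import GRing.Theory.
Local Open Scope ring_scope.

Definition is_hom (U V : zmodType) (f : U -> V) : Prop :=
  forall x y, f (x + y) = f x + f y.

Definition is_cocycle (G A : zmodType) (alpha : G -> G -> A) : Prop :=
  forall g1 g2 g3, alpha g1 g2 - alpha g1 (g2 + g3) + alpha (g1 + g2) g3
                   - alpha g2 g3 = 0.

Definition mulE (G A : zmodType) (alpha : G -> G -> A) (x y : A * G) : A * G :=
  (x.1 + y.1 + alpha x.2 y.2, x.2 + y.2).

Definition eta (G A : zmodType) (alpha : G -> G -> A) (g1 g2 : G) : A :=
  alpha g1 g2 - alpha g2 g1.

(* S generates A as a group: every subgroup containing S is all of A. *)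
Definition generates (A : zmodType) (S : A -> Prop) : Prop :=
  forall P : A -> Prop,
    P 0 -> (forall x y, P x -> P y -> P (x - y)) -> (forall x, S x -> P x) ->
    forall a, P a.

Definition image_eta (G A : zmodType) (alpha : G -> G -> A) : A -> Prop :=
  fun a => exists g1 g2, a = eta alpha g1 g2.

Definition pullback (G A : zmodType) (phi : G -> G) (alpha : G -> G -> A) :=
  fun g1 g2 => alpha (phi g1) (phi g2).
Definition pushforward (G A : zmodType) (psi : A -> A) (alpha : G -> G -> A) :=
  fun g1 g2 => psi (alpha g1 g2).

Definition delta (G A : zmodType) (mu : G -> A) : G -> G -> A :=
  fun g1 g2 => mu g1 + mu g2 - mu (g1 + g2).

Definition same_class (G A : zmodType) (beta gamma : G -> G -> A) : Prop :=
  exists mu : G -> A, forall g1 g2, beta g1 g2 - gamma g1 g2 = delta mu g1 g2.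

Definition is_lift (G A : zmodType) (alpha alpha' : G -> G -> A)
    (phi : G -> G) (Phi : A * G -> A * G) : Prop :=
  (forall x y, Phi (mulE alpha x y) = mulE alpha' (Phi x) (Phi y)) /\
  (forall x, (Phi x).2 = phi x.2).

Definition eta_compat (G A : zmodType) (alpha alpha' : G -> G -> A)
    (phi : G -> G) (psi : A -> A) : Prop :=
  forall g1 g2, psi (eta alpha g1 g2) = eta alpha' (phi g1) (phi g2).

(* Main.v *)
Require Import Defs.
From mathcomp Require Import all_boot all_order all_algebra.
Import GRing.Theory.
Local Open Scope ring_scope.
From Stdlib Require Import FunctionalExtensionality.

Section H.
Variables (G A : zmodType) (alpha alpha' : G -> G -> A) (phi : G -> G).

Lemma hom0 {U V : zmodType} {f : U -> V} : is_hom f -> f 0 = 0.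
Proof. by move=> hf; apply: (addrI (f 0)); rewrite addr0 -hf addr0. Qed.

Lemma coc0 (al : G -> G -> A) : is_cocycle al ->
  (forall g, al g 0 = al 0 0) /\ (forall g, al 0 g = al 0 0).
Proof.
move=> c; split=> g.
- have := c g 0 0; rewrite !addr0 (subrr (al g 0)) add0r => /eqP; rewrite subr_eq0 => /eqP //.
- have := c 0 0 g; rewrite !add0r subrK => /eqP; rewrite subr_eq0 => /eqP //.
Qed.

Lemma lift_decomp (Phi : A * G -> A * G) :
  is_cocycle alpha -> is_cocycle alpha' -> is_hom phi ->
  is_lift alpha alpha' phi Phi ->
  let h := fun b => (Phi (b - alpha 0 0, 0)).1 + alpha' 0 0 in
  [/\ is_hom h,
      (forall a g, Phi (a, g) = (h a + (Phi (0, g)).1, phi g)) &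
      (forall g1 g2, h (alpha g1 g2) - alpha' (phi g1) (phi g2)
          = delta (fun g => (Phi (0, g)).1) g1 g2)].
Proof.
move=> ca ca' hp [Hm H2] h.
have [ca0 _] := coc0 _ ca; have [ca0' _] := coc0 _ ca'.
have K : forall a b g, (Phi (a + b, g)).1 = (Phi (a, g)).1 + h b.
  move=> a b g.
  have := congr1 fst (Hm (a, g) (b - alpha 0 0, 0)).
  rewrite /mulE /=. rewrite ca0 addr0 addrA subrK !H2 /=.
  rewrite (hom0 hp : phi 0 = 0) ca0' => ->.
  by rewrite -addrA.
have hh : is_hom h.
  move=> a b; rewrite /h.
  by rewrite addrAC K addrAC.
have D : forall a g, Phi (a, g) = (h a + (Phi (0, g)).1, phi g).
  move=> a g; rewrite [Phi (a,g)]surjective_pairing H2 /=.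
  by rewrite -{1}(add0r a) K addrC.
split=> // g1 g2.
have := congr1 fst (Hm (0, g1) (0, g2)).
rewrite /mulE /= !add0r !H2 /= -{1}(add0r (alpha g1 g2)) K => E.
rewrite /delta; apply/eqP; by rewrite subr_eq addrAC -E addrAC subrr add0r.
Qed.


Lemma hom_sub {U V : zmodType} {f : U -> V} : is_hom f -> forall x y, f (x - y) = f x - f y.
Proof. by move=> hf x y; apply: (addIr (f y)); rewrite -hf !subrK. Qed.

Lemma delta_opp (m : G -> A) g1 g2 : delta (fun g => - m g) g1 g2 = - delta m g1 g2.
Proof. by rewrite /delta !opprD !opprK. Qed.

Lemma delta_sym (m : G -> A) g1 g2 : delta m g1 g2 = delta m g2 g1.
Proof. by rewrite /delta (addrC (m g1)) (addrC g1). Qed.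

Lemma decomp_eta (h : A -> A) (m : G -> A) : is_hom h ->
  (forall g1 g2, h (alpha g1 g2) - alpha' (phi g1) (phi g2) = delta m g1 g2) ->
  eta_compat alpha alpha' phi h.
Proof.
move=> hh E g1 g2; rewrite /eta (hom_sub hh).
have E' : forall g1 g2, h (alpha g1 g2) = delta m g1 g2 + alpha' (phi g1) (phi g2).
  by move=> x y; apply/eqP; rewrite -subr_eq E.
by rewrite !E' (delta_sym m g2 g1) opprD addrACA subrr add0r.
Qed.

Lemma lift_of (psi : A -> A) (mu : G -> A) : is_hom phi -> is_hom psi ->
  (forall g1 g2, pullback phi alpha' g1 g2 - pushforward psi alpha g1 g2 = delta mu g1 g2) ->
  is_lift alpha alpha' phi (fun x => (psi x.1 - mu x.2, phi x.2)).
Proof.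
move=> hp hpsi H; split=> [[a g1] [b g2]|//]; rewrite /mulE /=.
have H' : alpha' (phi g1) (phi g2) = delta mu g1 g2 + psi (alpha g1 g2).
  by apply/eqP; rewrite -subr_eq H.
rewrite hp H' !hpsi /delta; congr pair.
rewrite [psi a - _ + _]addrACA -opprD -(addrA (mu g1 + mu g2)) -(addrA (psi a + psi b) (- _)) addKr.
by rewrite (addrC (- _)) addrA.
Qed.

End H.
Arguments lift_decomp {G A alpha alpha' phi Phi}.
Lemma lift_decompE (G A : zmodType) (alpha alpha' : G -> G -> A) (phi : G -> G)
  (Phi : A * G -> A * G) :
  is_cocycle alpha -> is_cocycle alpha' -> is_hom phi ->
  is_lift alpha alpha' phi Phi ->
  exists h : A -> A, [/\ is_hom h,
      (forall a g, Phi (a, g) = (h a + (Phi (0, g)).1, phi g)) &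
      (forall g1 g2, h (alpha g1 g2) - alpha' (phi g1) (phi g2)
          = delta (fun g => (Phi (0, g)).1) g1 g2)].
Proof. by move=> *; eexists; apply: lift_decomp. Qed.
Arguments lift_decompE {G A alpha alpha' phi Phi}.
Arguments decomp_eta {G A alpha alpha' phi h m}.
Arguments lift_of {G A alpha alpha' phi psi mu}.
Arguments delta_opp {G A}.

Theorem proposition1p1 (p : nat) (G A : finZmodType)
    (alpha alpha' : G -> G -> A) :
  prime p -> p.-nat #|G| -> p.-nat #|A| ->
  is_cocycle alpha -> is_cocycle alpha' ->
  generates (image_eta alpha) -> generates (image_eta alpha') ->
  (forall phi : G -> G, is_hom phi ->
     ((exists Phi : A * G -> A * G, is_lift alpha alpha' phi Phi) <->
      (exists psi : A -> A, [/\ is_hom psi, eta_compat alpha alpha' phi psi &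
          same_class (pullback phi alpha') (pushforward psi alpha)])))
  /\
  (forall (phi : G -> G) (psi : A -> A), is_hom phi -> is_hom psi ->
     eta_compat alpha alpha' phi psi ->
     same_class (pullback phi alpha') (pushforward psi alpha) ->
     forall Phi : A * G -> A * G, is_lift alpha alpha' phi Phi ->
       exists! mu : G -> A,
         (forall a g, Phi (a, g) = (psi a + mu g, phi g)) /\
         (forall g1 g2, delta mu g1 g2 =
            pushforward psi alpha g1 g2 - pullback phi alpha' g1 g2))
  /\
  (forall phi : G -> G, is_hom phi -> bijective phi ->
     ((exists Phi : A * G -> A * G, is_lift alpha alpha' phi Phi /\ bijective Phi) <->
      (exists psi : A -> A, [/\ is_hom psi, bijective psi,
          eta_compat alpha alpha' phi psi &
          same_class (pullback phi alpha') (pushforward psi alpha)]))).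
Proof.
move=> _ _ _ ca ca' ga _.
have sc_of : forall (phi : G -> G) (h : A -> A) (m : G -> A),
    (forall g1 g2, h (alpha g1 g2) - alpha' (phi g1) (phi g2) = delta m g1 g2) ->
    same_class (pullback phi alpha') (pushforward h alpha).
  move=> phi h m E; exists (fun g => - m g) => g1 g2.
  by rewrite delta_opp -E opprB.
split; [|split].
- move=> phi hp; split.
  + case=> Phi HL; have [h [hh D E]] := lift_decompE ca ca' hp HL.
    eexists; split; [exact: hh| exact: decomp_eta hh E | exact: sc_of E].
  + case=> psi [hpsi _ [mu Hmu]].
    by eexists; apply: (lift_of hp hpsi Hmu).
- move=> phi psi hp hpsi ec _ Phi HL.
  have [h [hh D E]] := lift_decompE ca ca' hp HL.
  have ech := decomp_eta hh E.
  have hpsi_eq : forall a, h a = psi a.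
    apply: ga.
    + by rewrite (hom0 hh) (hom0 hpsi).
    + by move=> x y Hx Hy; rewrite (hom_sub hh) (hom_sub hpsi) Hx Hy.
    + by move=> x [g1 [g2 ->]]; rewrite ech ec.
  exists (fun g => (Phi (0, g)).1); split; first split.
  + by move=> a g; rewrite D -hpsi_eq.
  + by move=> g1 g2; rewrite /pushforward /pullback -E -hpsi_eq.
  + move=> mu' [Hmu' _]; apply: functional_extensionality => g.
    by rewrite Hmu' /= (hom0 hpsi) add0r.
- move=> phi hp [phinv f1 f2]; split.
  + case=> Phi [HL [Pinv P1 P2]]; have [h [hh D E]] := lift_decompE ca ca' hp HL.
    eexists; split; [exact: hh| | exact: decomp_eta hh E | exact: sc_of E].
    apply: injF_bij => a b /= Hab.
    have : Phi (a, 0) = Phi (b, 0) by rewrite (D a) (D b) Hab.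
    by move/(can_inj P1) => [].
  + case=> psi [hpsi [psinv s1 s2] ec [mu Hmu]].
    exists (fun x => (psi x.1 - mu x.2, phi x.2)); split.
      exact: (lift_of hp hpsi Hmu).
    apply: (@injF_bij _ (fun x : A * G => (psi x.1 - mu x.2, phi x.2))).
    move=> [a g] [b k] /= [] H1 H2.
    have gk : g = k by rewrite -(f1 g) H2 f1.
    subst k; move/addIr: H1 => H1.
    by rewrite -(s1 a) H1 s1.
Qed.
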